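(* Let $\Gamma=(\mathcal{V},\mathcal{H})$ be an oriented hypergraph containing an $l$-duplicate family of $t$-twin vertices. Then $t$ is an eigenvalue of the normalized Laplacian $L$ of $\Gamma$ with multiplicity at least $l-1$, and $0$ is an eigenvalue of $L$ with multiplicity at least $l(t-1)$.
   Context: An oriented hypergraph is a pair $\Gamma=(\mathcal{V},\mathcal{H})$ where $\mathcal{V}=\{v_1,\ldots,v_N\}$ is a finite set and each hyperedge $h$ is a pair $(h_{in},h_{out})$ of disjoint nonempty subsets of $\mathcal{V}$; standing assumption: no isolated vertices. Vertices are co-oriented in $h$ if they lie in the same one of $h_{in},h_{out}$, anti-oriented if in different ones. $\deg(v)$ is the number of hyperedges containing $v$, $D$ the diagonal degree matrix; the adjacency matrix has $A_{ii}=0$ and $A_{ij}=\#\{h: v_i,v_j\text{ anti-oriented in }h\}-\#\{h:v_i,v_j\text{ co-oriented in }h\}$ for $i\ne j$; $L=\mathrm{Id}-D^{-1}A$. Two vertices are twins if they belong to exactly the same hyperedges and, in each such hyperedge, are co-oriented (so $A_{ij}=-\deg v_i=-\deg v_j$ and $A_{ik}=A_{jk}$ for $k\ne i,j$). A family $\mathcal{V}_1\sqcup\cdots\sqcup\mathcal{V}_l\subset\mathcal{V}$ of pairwise disjoint sets is an $l$-duplicate family of $t$-twin vertices if each $\mathcal{V}_i$ has $t$ elements which are pairwise twins, and for $i\ne j$, every $v\in\mathcal{V}_i$, $w\in\mathcal{V}_j$ satisfy $A_{vw}=0$ and $A_{vk}=A_{wk}$ for all vertices $v_k\notin\mathcal{V}_1\sqcup\cdots\sqcup\mathcal{V}_l$.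 *)

(* Defs.v *)
From mathcomp Require Import all_boot all_order all_algebra.
Set Implicit Arguments. Unset Strict Implicit. Unset Printing Implicit Defensive.
Import Order.TTheory GRing.Theory Num.Theory.
Local Open Scope ring_scope.

(* Vertices are 'I_N; a hyperedge h is a pair (h_in, h_out) = (h.1, h.2). *)
Definition hedge (N : nat) := ({set 'I_N} * {set 'I_N})%type.

Definition in_hedge N (v : 'I_N) (h : hedge N) : bool := (v \in h.1) || (v \in h.2).

Definition co_oriented N (v w : 'I_N) (h : hedge N) : bool :=
  ((v \in h.1) && (w \in h.1)) || ((v \in h.2) && (w \in h.2)).

Definition anti_oriented N (v w : 'I_N) (h : hedge N) : bool :=
  ((v \in h.1) && (w \in h.2)) || ((v \in h.2) && (w \in h.1)).

Definition oriented_hypergraph N (H : seq (hedge N)) : Prop :=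
  uniq H /\ forall h, h \in H -> [/\ [disjoint h.1 & h.2], h.1 != set0 & h.2 != set0].

Definition deg N (H : seq (hedge N)) (v : 'I_N) : nat := count (in_hedge v) H.

Definition no_isolated N (H : seq (hedge N)) : Prop := forall v : 'I_N, (0 < deg H v)%N.

Definition adj N (H : seq (hedge N)) (i j : 'I_N) : int :=
  if i == j then 0
  else (count (anti_oriented i j) H)%:Z - (count (co_oriented i j) H)%:Z.

Definition nlaplacian (R : fieldType) N (H : seq (hedge N)) : 'M[R]_N :=
  \matrix_(i, j) ((i == j)%:R - ((adj H i j)%:~R / (deg H i)%:R)).

Definition twins N (H : seq (hedge N)) (v w : 'I_N) : Prop :=
  forall h, h \in H -> (in_hedge v h = in_hedge w h) /\ (in_hedge v h -> co_oriented v w h).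

Definition duplicate_family N (H : seq (hedge N)) (l t : nat) (V : 'I_l -> {set 'I_N}) : Prop :=
  [/\ forall i j : 'I_l, i != j -> [disjoint V i & V j],
      forall i : 'I_l, #|V i| = t,
      forall (i : 'I_l) (v w : 'I_N), v \in V i -> w \in V i -> v != w -> twins H v w &
      forall (i j : 'I_l) (v w : 'I_N), i != j -> v \in V i -> w \in V j ->
        adj H v w = 0 /\
        (forall k : 'I_N, k \notin \bigcup_(m < l) V m -> adj H v k = adj H w k)].

(* Main.v *)
Require Import Defs.
From mathcomp Require Import all_boot all_order all_algebra.
From mathcomp Require Import ring.
Set Implicit Arguments. Unset Strict Implicit. Unset Printing Implicit Defensive.
Import Order.TTheory GRing.Theory Num.Theory.
Local Open Scope ring_scope.

Lemma degR_neq0 (R : realFieldType) N (H : seq (hedge N)) (k : 'I_N) :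
  no_isolated H -> (deg H k)%:R != 0 :> R.
Proof. by move=> nI; rewrite pnatr_eq0 -lt0n nI. Qed.

Lemma eig_row (R : realFieldType) N (H : seq (hedge N)) (a : R) (x : 'I_N -> R) :
  no_isolated H ->
  (forall c, \sum_k x k * (adj H k c)%:~R = (1 - a) * (deg H c)%:R * x c) ->
  (\row_c ((deg H c)%:R * x c)%R <= eigenspace (nlaplacian R H) a)%MS.
Proof.
move=> nI Hx; apply/sub_kermxP; apply/rowP => c; rewrite !mxE.
have E : forall k, (\row_c ((deg H c)%:R * x c)) 0 k * (nlaplacian R H - a%:M) k c
   = (k == c)%:R * ((1 - a) * (deg H k)%:R * x k) - x k * (adj H k c)%:~R.
  move=> k; rewrite !mxE; have := degR_neq0 R k nI.
  case: (k == c) => /= dn; rewrite ?mulr1n ?mulr0n; field => //.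
rewrite (eq_bigr _ (fun k _ => E k)) sumrB Hx.
rewrite (bigD1 c) //= eqxx mul1r big1 ?addr0 ?subrr // => k /negbTE ->; by rewrite mul0r.
Qed.

Lemma rank_family (R : realFieldType) N (H : seq (hedge N)) (a : R) (T : finType)
  (X : T -> 'I_N -> R) (p : T -> 'I_N) :
  no_isolated H ->
  (forall s s', X s (p s') = (s == s')%:R) ->
  (forall s c, \sum_k X s k * (adj H k c)%:~R = (1 - a) * (deg H c)%:R * X s c) ->
  (#|T| <= \rank (eigenspace (nlaplacian R H) a))%N.
Proof.
move=> nI HX He.
pose M := \matrix_(k < #|T|) (\row_c ((deg H c)%:R * X (enum_val k) c)%R : 'rV[R]_N).
pose B := \matrix_(c < N, k < #|T|) ((c == p (enum_val k))%:R / (deg H c)%:R : R).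
have MB : M *m B = 1%:M.
  apply/matrixP => k k'; rewrite !mxE.
  rewrite (bigD1 (p (enum_val k'))) //= big1 ?addr0.
    rewrite !mxE eqxx mul1r mulrC mulrA mulVf ?degR_neq0 // mul1r HX.
    by rewrite (inj_eq enum_val_inj).
  move=> c /negbTE nc; rewrite !mxE nc mul0r mulr0 //.
apply: leq_trans (mxrankS (_ : (M <= _)%MS)).
  by rewrite -{1}(mxrank1 R #|T|) -MB mxrankM_maxl.
apply/row_subP => k; rewrite rowK; exact: eig_row.
Qed.
Lemma twin_mem N (H : seq (hedge N)) v w : oriented_hypergraph H -> twins H v w ->
  forall h, h \in H -> (v \in h.1) = (w \in h.1) /\ (v \in h.2) = (w \in h.2).
Proof.
move=> [_ oH] tw h hH; have [dj _ _] := oH h hH; have [ein co] := tw h hH.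
have dv := disjointFr (x:=v) dj; have dw := disjointFr (x:=w) dj.
move: dv dw ein co; rewrite /in_hedge /co_oriented.
case: (v \in h.1); case: (v \in h.2); case: (w \in h.1); case: (w \in h.2) => //= dv dw ein co.
all: try by [ have := dv erefl | have := dw erefl | have := co erefl ].
Qed.

Lemma twin_deg N (H : seq (hedge N)) v w : oriented_hypergraph H -> twins H v w ->
  deg H v = deg H w.
Proof.
move=> oH tw; apply: eq_in_count => h hH; have [e1 e2] := twin_mem oH tw hH.
by rewrite /in_hedge e1 e2.
Qed.

Lemma twin_adj_vw N (H : seq (hedge N)) v w : oriented_hypergraph H -> twins H v w ->
  v != w -> adj H v w = - (deg H v)%:Z /\ adj H w v = - (deg H v)%:Z.
Proof.
move=> oH tw vw; rewrite /adj (negbTE vw) eq_sym (negbTE vw).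
have dj : forall h, h \in H -> [disjoint h.1 & h.2] by move=> h hH; have [? _ _] := oH.2 h hH.
have a1 : count (anti_oriented v w) H = 0%N.
  rewrite (@eq_in_count _ _ pred0) ?count_pred0 // => h hH /=; have [e1 e2] := twin_mem oH tw hH.
  rewrite /anti_oriented -e1 -e2; case: (boolP (v \in h.1)) => v1 /=; last by rewrite andbF.
  by rewrite (disjointFr (dj h hH) v1).
have a2 : count (anti_oriented w v) H = 0%N.
  rewrite (@eq_in_count _ _ pred0) ?count_pred0 // => h hH /=; have [e1 e2] := twin_mem oH tw hH.
  rewrite /anti_oriented -e1 -e2; case: (boolP (v \in h.1)) => v1 /=; last by rewrite andbF.
  by rewrite (disjointFr (dj h hH) v1).
have c1 : count (co_oriented v w) H = deg H v.
  apply: eq_in_count => h hH /=; have [e1 e2] := twin_mem oH tw hH.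
  by rewrite /co_oriented -e1 -e2 !andbb.
have c2 : count (co_oriented w v) H = deg H v.
  apply: eq_in_count => h hH /=; have [e1 e2] := twin_mem oH tw hH.
  by rewrite /co_oriented -e1 -e2 !andbb.
by rewrite a1 a2 c1 c2 sub0r.
Qed.

Lemma twin_adj_other N (H : seq (hedge N)) v w c : oriented_hypergraph H -> twins H v w ->
  c != v -> c != w -> adj H v c = adj H w c.
Proof.
move=> oH tw cv cw; rewrite /adj eq_sym (negbTE cv) eq_sym (negbTE cw).
congr (Posz _ - Posz _); apply: eq_in_count => h hH /=; have [e1 e2] := twin_mem oH tw hH.
  by rewrite /anti_oriented e1 e2.
by rewrite /co_oriented e1 e2.
Qed.

Lemma sum_ind (R : realFieldType) N (A : {set 'I_N}) (F : 'I_N -> R) :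
  \sum_k (k \in A)%:R * F k = \sum_(k in A) F k.
Proof.
rewrite [RHS]big_mkcond; apply: eq_bigr => k _.
by case: (k \in A); rewrite ?mul1r ?mul0r.
Qed.

Lemma sum_eq1 (R : realFieldType) N (v : 'I_N) (F : 'I_N -> R) :
  \sum_k (k == v)%:R * F k = F v.
Proof.
rewrite (bigD1 v) //= eqxx mul1r big1 ?addr0 // => k /negbTE ->; by rewrite mul0r.
Qed.

Theorem mainTheorem3 (R : realFieldType) (N : nat) (H : seq (hedge N))
  (l t : nat) (V : 'I_l -> {set 'I_N}) :
  oriented_hypergraph H -> no_isolated H ->
  (0 < t)%N -> duplicate_family H t V ->
  (l.-1 <= \rank (eigenspace (nlaplacian R H) t%:R))%N /\
  (l * t.-1 <= \rank (eigenspace (nlaplacian R H) 0))%N.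
Proof.
move=> oH nI; case: t => [//|t] _; case: l V => [|l] V [Hdisj Hcard Htw Hdup]; first by split.
have [v0 _] : exists v0, v0 \in V ord0 by apply/set0Pn; rewrite -card_gt0 Hcard.
pose f i j := nth v0 (enum (V i)) j.
have fin : forall i j, (j < t.+1)%N -> f i j \in V i.
  by move=> i j jt; rewrite -mem_enum /f mem_nth // -cardE Hcard.
have memV : forall i j v, v \in V i -> (v \in V j) = (i == j).
  move=> i j v vi; case: (eqVneq i j) => [<-//|ne]; exact: disjointFr (Hdisj _ _ ne) vi.
have finj : forall i i' j j', (j < t.+1)%N -> (j' < t.+1)%N -> f i j = f i' j' -> i = i' /\ j = j'.
  move=> i i' j j' jt j't E; have H1 : f i' j' \in V i := eq_ind _ (fun x => x \in V i) (fin i j jt) _ E.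
  move: H1; rewrite (memV i') ?fin // eq_sym => /eqP ii'.
  subst i'; split=> //; apply/eqP.
  by rewrite -(nth_uniq v0 _ _ (enum_uniq (V i))) -?cardE ?Hcard //; exact/eqP.
have adjcls : forall i k c, k \in V i -> c \in V i ->
    (adj H k c)%:~R = - (deg H c)%:R + (k == c)%:R * (deg H c)%:R :> R.
  move=> i k c kV cV; case: (eqVneq k c) => [->|kc].
    by rewrite /adj eqxx mul1r addNr.
  have ck : c != k by rewrite eq_sym.
  have [_ ->] := twin_adj_vw oH (Htw i c k cV kV ck) ck.
  by rewrite mul0r addr0 intrN.
pose S m c := \sum_(k in V m) (adj H k c)%:~R : R.
have Sself : forall m c, c \in V m -> S m c = - (deg H c)%:R * (t.+1)%:R + (deg H c)%:R.
  move=> m c cV; rewrite /S (eq_bigr _ (fun k kV => adjcls m k c kV cV)) big_split /=.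
  rewrite sumr_const Hcard mulr_natr; congr (_ + _).
  rewrite (bigD1 c) //= eqxx mul1r big1 ?addr0 // => k /andP[_ /negbTE ->]; by rewrite mul0r.
have Sother : forall m m' c, m != m' -> c \in V m' -> S m c = 0.
  move=> m m' c ne cV; rewrite /S big1 // => k kV.
  by rewrite (Hdup m m' k c ne kV cV).1.
have Sout : forall m m' c, m != m' -> c \notin \bigcup_(i < l.+1) V i -> S m c = S m' c.
  move=> m m' c ne cout; have ne' : m' != m by rewrite eq_sym.
  have w0V := fin m' 0%N isT; have u0V := fin m 0%N isT.
  rewrite /S (eq_bigr (fun _ => (adj H (f m' 0%N) c)%:~R)); last first.
    by move=> k kV; rewrite ((Hdup m m' k _ ne kV w0V).2 c cout).
  rewrite [RHS](eq_bigr (fun _ => (adj H (f m 0%N) c)%:~R)); last first.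
    by move=> k kV; rewrite ((Hdup m' m k _ ne' kV u0V).2 c cout).
  by rewrite !sumr_const !Hcard ((Hdup m m' _ _ ne u0V w0V).2 c cout).
have eqIJ : forall I J c, I != J ->
    \sum_k ((k \in V I)%:R - (k \in V J)%:R) * (adj H k c)%:~R
    = (1 - (t.+1)%:R) * (deg H c)%:R * ((c \in V I)%:R - (c \in V J)%:R) :> R.
  move=> I J c IJ.
  rewrite (eq_bigr (fun k => (k \in V I)%:R * (adj H k c)%:~R - (k \in V J)%:R * (adj H k c)%:~R));
    last by move=> k _; rewrite mulrBl.
  rewrite sumrB !sum_ind -/(S I c) -/(S J c).
  case: (boolP (c \in \bigcup_(m < l.+1) V m)) => [/bigcupP [m _ cm] | cout].
    case: (eqVneq m I) => [mI|mI].
      subst m; rewrite Sself // (Sother J I) 1?eq_sym // (memV I I) // (memV I J) // eqxx (negbTE IJ) /=.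
      ring.
    case: (eqVneq m J) => [mJ|mJ].
      subst m; rewrite (Sself J) // (Sother I J) // (memV J I) // (memV J J) // eqxx eq_sym (negbTE IJ) /=.
      ring.
    rewrite (Sother I m) 1?eq_sym // (Sother J m) 1?eq_sym // (memV m I) // (memV m J) //.
    by rewrite (negbTE mI) (negbTE mJ) /= subrr mulr0.
  have cI : c \notin V I by apply: contra cout => cI; apply/bigcupP; exists I.
  have cJ : c \notin V J by apply: contra cout => cJ; apply/bigcupP; exists J.
  by rewrite (Sout I J) // (negbTE cI) (negbTE cJ) !subrr mulr0.
have wI : forall i i' : 'I_l,
    (widen_ord (leqnSn l) i == widen_ord (leqnSn l) i') = (i == i').
  move=> i i'; apply/eqP/eqP => [E|->] //; apply: val_inj; exact: (congr1 val E).
have wmax : forall i : 'I_l, widen_ord (leqnSn l) i != ord_max.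
  move=> i; apply/eqP => /(congr1 val) /= E; have := ltn_ord i; by rewrite E ltnn.
split.
  have := @rank_family R N H (t.+1)%:R 'I_l
    (fun i c => (c \in V (widen_ord (leqnSn l) i))%:R - (c \in V ord_max)%:R)
    (fun i => f (widen_ord (leqnSn l) i) 0%N) nI.
  rewrite card_ord /=; apply.
    move=> i i'; rewrite (memV (widen_ord (leqnSn l) i')) ?fin //.
    rewrite (memV (widen_ord (leqnSn l) i') ord_max) ?fin //.
    by rewrite (negbTE (wmax i')) subr0 eq_sym wI.
  by move=> i c; apply: eqIJ.
have := @rank_family R N H 0 ('I_l.+1 * 'I_t)%type
  (fun s c => (c == f s.1 s.2.+1)%:R - (c == f s.1 0%N)%:R)
  (fun s => f s.1 s.2.+1) nI.
rewrite card_prod !card_ord /=; apply.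
  move=> [i j] [i' j'] /=.
  have -> : (f i' j'.+1 == f i 0%N) = false.
    by apply/negbTE/eqP => /(finj i' i j'.+1 0%N (ltn_ord j') isT) [].
  case: (eqVneq (i, j) (i', j')) => [[<- <-]|ne]; first by rewrite eqxx subr0.
  rewrite subr0; suff -> : (f i' j'.+1 == f i j.+1) = false by [].
  apply/negP => /eqP /(finj i' i j'.+1 j.+1 (ltn_ord j') (ltn_ord j)) [] E1 [] /val_inj E2.
  by move: ne; rewrite E1 E2 eqxx.
move=> [i j] c /=.
rewrite (eq_bigr (fun k => (k == f i j.+1)%:R * (adj H k c)%:~R - (k == f i 0%N)%:R * (adj H k c)%:~R));
  last by move=> k _; rewrite mulrBl.
rewrite sumrB !sum_eq1 subr0 mul1r.
have vw : f i j.+1 != f i 0%N by apply/eqP => /(finj i i j.+1 0%N (ltn_ord j) isT) [].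
have tw := Htw i _ _ (fin i j.+1 (ltn_ord j)) (fin i 0%N isT) vw.
have [avw awv] := twin_adj_vw oH tw vw.
have dvw := twin_deg oH tw.
case: (eqVneq c (f i j.+1)) => [->|cv].
  rewrite (negbTE vw) awv /adj eqxx intrN /=; ring.
case: (eqVneq c (f i 0%N)) => [->|cw].
  rewrite avw /adj eqxx intrN dvw /=; ring.
by rewrite (twin_adj_other oH tw cv cw) subrr /= subrr mulr0.
Qed.
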